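(* Let $\Psi\subset\mathrm{Cl}^+(3)$ be the following set of 20 spinors (forming an $A_4$ root system inside the $H_4$ root system $2I$), writing $e_{ij}=e_ie_j$ and $\sigma=\frac{1-\sqrt5}{2}$: $\pm1$; $\pm\tfrac12(\tau e_{12}+\sigma e_{13}+e_{23})$; $\pm\tfrac12(e_{12}-\tau e_{13}+\sigma e_{23})$; $\pm\tfrac12(\sigma e_{12}-e_{13}-\tau e_{23})$; and $\tfrac12(\epsilon_1+\epsilon_2B)$ for all signs $\epsilon_1,\epsilon_2\in\{\pm1\}$ and $B\in\{\tau e_{12}+\sigma e_{23},\ \sigma e_{13}+\tau e_{23},\ \sigma e_{12}-\tau e_{13}\}$. Let $C=2I\setminus\Psi$ (100 elements). Then both $\Psi$ and $C$ are invariant under the reflection group $A_4$ generated by the reflections $s_R(X)=-R\tilde XR$, $R\in\Psi$.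
   Context: $\mathrm{Cl}(3)$ is the real Clifford algebra of Euclidean $\mathbb{R}^3$ with orthonormal basis $e_1,e_2,e_3$ ($e_i^2=1$, $e_ie_j=-e_je_i$ for $i\neq j$). The even subalgebra $\mathrm{Cl}^+(3)$ is spanned by $1,e_2e_3,e_3e_1,e_1e_2$ (spinors). Reversal $\tilde{\ }$ reverses the order of vector factors. The spinor inner product $(R_1,R_2)=\tfrac12(R_1\tilde R_2+R_2\tilde R_1)$ makes $\mathrm{Cl}^+(3)$ a 4D Euclidean space with orthonormal basis $1,e_2e_3,e_3e_1,e_1e_2$; for a unit spinor $R$, $s_R(X)=-R\tilde XR$ is the reflection in the hyperplane orthogonal to $R$. Let $\tau=\frac{1+\sqrt5}{2}$. The $H_3$ simple roots are $a_1=e_2$, $a_2=\tfrac12(-\tau e_1-e_2-(\tau-1)e_3)$, $a_3=e_1$. The binary icosahedral group $2I$ is the set of all products of an even number of factors from $\{a_1,a_2,a_3\}$ (order 120); viewed as 120 vectors in the 4D spinor space it is the $H_4$ root system (600-cell). *)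

(* Defs.v *)
(* The real Clifford algebra Cl(3) of Euclidean R^3, modelled
   over an arbitrary real closed field R (the statement is purely algebraic). *)
From HB Require Import structures.
From mathcomp Require Import all_boot all_order all_algebra.
Set Implicit Arguments. Unset Strict Implicit. Unset Printing Implicit Defensive.
Import Order.TTheory GRing.Theory Num.Theory.
Local Open Scope ring_scope.

Notation mv R := {ffun {set 'I_3} -> R^o}.

Section Cl3.
Variable R : rcfType.

(* A multivector: coefficients on the basis blades e_A, A ⊆ {0,1,2}
   (index i stands for e_(i+1)); e_A is the increasing product of the e_i, i ∈ A. *)

(* sign of e_A e_B = sign * e_(A Δ B), with e_i^2 = 1, e_i e_j = - e_j e_i *)
Definition bsign (A B : {set 'I_3}) : R :=
  (-1) ^+ #|[set p : 'I_3 * 'I_3 | (p.1 \in A) && (p.2 \in B) && (p.2 < p.1)%N]|.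

Definition gp (X Y : mv R) : mv R :=
  [ffun K : {set 'I_3} => \sum_(A : {set 'I_3}) \sum_(B : {set 'I_3} | (A :\: B) :|: (B :\: A) == K)
              bsign A B * X A * Y B].

Definition rev (X : mv R) : mv R :=
  [ffun A : {set 'I_3} => (-1) ^+ ('C(#|A|, 2)) * X A].

Definition blade (A : {set 'I_3}) : mv R := [ffun B : {set 'I_3} => (B == A)%:R].
Definition one : mv R := blade set0.
Definition e (i : 'I_3) : mv R := blade [set i].

Definition e1 : mv R := e (@Ordinal 3 0 isT).
Definition e2 : mv R := e (@Ordinal 3 1 isT).
Definition e3 : mv R := e (@Ordinal 3 2 isT).
Definition e12 : mv R := gp e1 e2.
Definition e13 : mv R := gp e1 e3.
Definition e23 : mv R := gp e2 e3.

Definition tau : R := (1 + Num.sqrt 5) / 2.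
Definition sigma : R := (1 - Num.sqrt 5) / 2.

(* H3 simple roots *)
Definition a1 : mv R := e2.
Definition a2 : mv R := (1/2 : R) *: (- (tau *: e1) - e2 - (tau - 1) *: e3).
Definition a3 : mv R := e1.
Definition a (i : 'I_3) : mv R :=
  match val i with 0 => a1 | 1 => a2 | _ => a3 end.

Definition prodw (w : seq 'I_3) : mv R := foldr (fun i acc => gp (a i) acc) one w.

Definition in2I (X : mv R) : Prop := exists w : seq 'I_3, ~~ odd (size w) /\ X = prodw w.

Definition half : R := 1 / 2.

Definition Bs : seq (mv R) :=
  [:: tau *: e12 + sigma *: e23; sigma *: e13 + tau *: e23; sigma *: e12 - tau *: e13].

Definition Psi : seq (mv R) :=
  [seq s *: v | s <- [:: 1; -1 : R], v <- [:: one;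
       half *: (tau *: e12 + sigma *: e13 + e23);
       half *: (e12 - tau *: e13 + sigma *: e23);
       half *: (sigma *: e12 - e13 - tau *: e23)]]
  ++ [seq half *: (ss.1 *: one + ss.2 *: B)
       | ss <- [seq (s1, s2) | s1 <- [:: 1; -1 : R], s2 <- [:: 1; -1 : R]], B <- Bs].

Definition inC (X : mv R) : Prop := in2I X /\ X \notin Psi.

Definition refl (Rs X : mv R) : mv R := - gp (gp Rs (rev X)) Rs.

(* action of an element of the group generated by the s_R, R in Psi,
   given as a word ws of reflecting spinors: s_{ws_0} o s_{ws_1} o ... *)
Definition actw (ws : seq (mv R)) (X : mv R) : mv R := foldr refl X ws.

End Cl3.

(* Main.v *)
Require Import Defs.
From HB Require Import structures.
From mathcomp Require Import all_boot all_order all_algebra ring.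
Set Implicit Arguments. Unset Strict Implicit. Unset Printing Implicit Defensive.
Import Order.TTheory GRing.Theory Num.Theory.
Local Open Scope ring_scope.


Notation v8 T := (T * T * T * T * T * T * T * T)%type.
Definition get T (u : v8 T) (a0 a1 a2 : bool) : T :=
  let '(x0,x1,x2,x3,x4,x5,x6,x7) := u in
  match a0, a1, a2 with
  | false,false,false => x0 | true,false,false => x1
  | false,true,false => x2 | true,true,false => x3
  | false,false,true => x4 | true,false,true => x5
  | false,true,true => x6 | true,true,true => x7 end.
Definition mkv T (f : bool -> bool -> bool -> T) : v8 T :=
  (f false false false, f true false false, f false true false, f true true false,
   f false false true, f true false true, f false true true, f true true true).
Lemma get_mkv T f a b c : get (@mkv T f) a b c = f a b c.
Proof. by case: a; case: b; case: c. Qed.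
Lemma mkv_get T (u : v8 T) : mkv (get u) = u.
Proof. by case: u => [[[[[[[? ?] ?] ?] ?] ?] ?] ?]. Qed.
Lemma eq_mkv T (f g : bool -> bool -> bool -> T) :
  (forall a b c, f a b c = g a b c) -> mkv f = mkv g.
Proof. by move=> H; rewrite /mkv !H. Qed.
Definition map8 T U (f : T -> U) (u : v8 T) : v8 U := mkv (fun a b c => f (get u a b c)).

Section Gen.
Variables (T : Type) (add mul : T -> T -> T) (opp : T -> T).
Definition sum8 (f : bool -> bool -> bool -> T) : T :=
  add (add (add (f true true true) (f true true false)) (add (f true false true) (f true false false)))
      (add (add (f false true true) (f false true false)) (add (f false false true) (f false false false))).
Definition sgnb (a0 a1 a2 b0 b1 b2 : bool) : bool := (a1 && b0) (+) (a2 && b0) (+) (a2 && b1).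
Definition gp8 (u v : v8 T) : v8 T := mkv (fun k0 k1 k2 => sum8 (fun a0 a1 a2 =>
   if sgnb a0 a1 a2 (a0 (+) k0) (a1 (+) k1) (a2 (+) k2)
   then opp (mul (get u a0 a1 a2) (get v (a0 (+) k0) (a1 (+) k1) (a2 (+) k2)))
   else mul (get u a0 a1 a2) (get v (a0 (+) k0) (a1 (+) k1) (a2 (+) k2)))).
Definition add8 (u v : v8 T) : v8 T := mkv (fun a b c => add (get u a b c) (get v a b c)).
Definition opp8 (u : v8 T) : v8 T := map8 opp u.
Definition scale8 (s : T) (u : v8 T) : v8 T := map8 (mul s) u.
Definition rev8 (u : v8 T) : v8 T := mkv (fun a b c =>
  if (a && b) || (a && c) || (b && c) then opp (get u a b c) else get u a b c).
Definition blade8 (z o : T) (a b c : bool) : v8 T :=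
  mkv (fun x y w => if (x == a) && (y == b) && (w == c) then o else z).
Lemma sum8_ext f g : (forall a b c, f a b c = g a b c) -> sum8 f = sum8 g.
Proof. by move=> H; rewrite /sum8 !H. Qed.
End Gen.

Section Morph.
Variables (T U : Type) (addT mulT : T -> T -> T) (oppT : T -> T)
  (addU mulU : U -> U -> U) (oppU : U -> U) (f : U -> T).
Hypotheses (fD : forall x y, f (addU x y) = addT (f x) (f y))
  (fM : forall x y, f (mulU x y) = mulT (f x) (f y))
  (fN : forall x, f (oppU x) = oppT (f x)).
Lemma fif (b : bool) x : f (if b then oppU x else x) = if b then oppT (f x) else f x.
Proof. by case: b. Qed.
Lemma map8_gp8 u v : map8 f (gp8 addU mulU oppU u v) = gp8 addT mulT oppT (map8 f u) (map8 f v).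
Proof.
rewrite /map8 /gp8; apply: eq_mkv => a b c; rewrite get_mkv /sum8 !fD !fif !fM !get_mkv.
by [].
Qed.
Lemma map8_add8 u v : map8 f (add8 addU u v) = add8 addT (map8 f u) (map8 f v).
Proof. by rewrite /map8 /add8; apply: eq_mkv => a b c; rewrite !get_mkv fD. Qed.
Lemma map8_opp8 u : map8 f (opp8 oppU u) = opp8 oppT (map8 f u).
Proof. by rewrite /map8 /opp8; apply: eq_mkv => a b c; rewrite !get_mkv fN. Qed.
Lemma map8_scale8 s u : map8 f (scale8 mulU s u) = scale8 mulT (f s) (map8 f u).
Proof. by rewrite /map8 /scale8; apply: eq_mkv => a b c; rewrite !get_mkv fM. Qed.
Lemma map8_rev8 u : map8 f (rev8 oppU u) = rev8 oppT (map8 f u).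
Proof. by rewrite /map8 /rev8; apply: eq_mkv => a b c; rewrite !get_mkv fif. Qed.
Lemma map8_blade8 z o z' o' a b c : f z = z' -> f o = o' ->
  map8 f (blade8 z o a b c) = blade8 z' o' a b c.
Proof. by move=> hz ho; rewrite /map8 /blade8; apply: eq_mkv => x y w; rewrite !get_mkv; case: ifP. Qed.
End Morph.

Definition i0 : 'I_3 := @Ordinal 3 0 isT.
Definition i1 : 'I_3 := @Ordinal 3 1 isT.
Definition i2 : 'I_3 := @Ordinal 3 2 isT.
Definition mk (a0 a1 a2 : bool) : {set 'I_3} := [set i : 'I_3 | nth false [:: a0; a1; a2] i].
Lemma in_mk a0 a1 a2 i : (i \in mk a0 a1 a2) = nth false [:: a0; a1; a2] i.
Proof. by rewrite inE. Qed.
Lemma mkK (A : {set 'I_3}) : A = mk (i0 \in A) (i1 \in A) (i2 \in A).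
Proof.
apply/setP => i; rewrite in_mk; case: i => [[|[|[|n]]] Hi] //=;
  by congr (_ \in A); apply: val_inj.
Qed.
Lemma eq_mk a0 a1 a2 b0 b1 b2 :
  (mk a0 a1 a2 == mk b0 b1 b2) = [&& a0 == b0, a1 == b1 & a2 == b2].
Proof.
apply/eqP/and3P => [/setP H|[/eqP-> /eqP-> /eqP->]] //.
by have := H i0; have := H i1; have := H i2; rewrite !in_mk /= => -> -> ->.
Qed.
Lemma symd_mk a0 a1 a2 b0 b1 b2 :
  (mk a0 a1 a2 :\: mk b0 b1 b2) :|: (mk b0 b1 b2 :\: mk a0 a1 a2) =
  mk (a0 (+) b0) (a1 (+) b1) (a2 (+) b2).
Proof.
apply/setP => i; rewrite !inE; case: i => [[|[|[|n]]] Hi] //=;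
  by case: a0; case: a1; case: a2; case: b0; case: b1; case: b2.
Qed.
Lemma card_mk a0 a1 a2 : #|mk a0 a1 a2| = (a0 + a1 + a2)%N.
Proof.
rewrite -sum1_card big_mkcond /= big_ord_recl big_ord_recl big_ord_recl big_ord0.
rewrite !in_mk /=.
by case: a0; case: a1; case: a2.
Qed.


Section RR.
Variable R : rcfType.

Lemma bsign_mk a0 a1 a2 b0 b1 b2 :
  bsign R (mk a0 a1 a2) (mk b0 b1 b2) = if sgnb a0 a1 a2 b0 b1 b2 then -1 else 1.
Proof.
rewrite /bsign.
have -> : #|[set p : 'I_3 * 'I_3 | (p.1 \in mk a0 a1 a2) && (p.2 \in mk b0 b1 b2) && (p.2 < p.1)%N]|
   = ((a1 && b0) + (a2 && b0) + (a2 && b1))%N.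
  set S := [set p : 'I_3 * 'I_3 | _].
  rewrite -sum1_card big_mkcond (eq_bigr (fun p => if (p.1, p.2) \in S then 1%N else 0%N)); last by case.
  rewrite -(pair_bigA _ (fun i j => if (i, j) \in S then 1%N else 0%N)) /=.
  rewrite /S !big_ord_recl !big_ord0 /= !inE /=; clear S.
  by case: a0; case: a1; case: a2; case: b0; case: b1; case: b2.
rewrite -signr_odd !oddD !oddb /sgnb.
by case: (_ (+) _).
Qed.

Lemma sum_set3 (V : nmodType) (F : {set 'I_3} -> V) :
  \sum_(A : {set 'I_3}) F A = sum8 +%R (fun a b c => F (mk a b c)).
Proof.
rewrite (reindex (fun x : bool * bool * bool => mk x.1.1 x.1.2 x.2)) /=; last first.
  exists (fun A : {set 'I_3} => (i0 \in A, i1 \in A, i2 \in A)) => [[[a b] c] _ | A _] /=.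
    by rewrite !in_mk.
  by rewrite -mkK.
rewrite -(pair_big xpredT xpredT (fun (x : bool * bool) (c : bool) => F (mk x.1 x.2 c))) /=.
rewrite -(pair_big xpredT xpredT (fun (a b : bool) => \sum_(c : bool) F (mk a b c))) /=.
by rewrite !big_bool /= /sum8.
Qed.

Definition IR (u : v8 R) : mv R := [ffun A : {set 'I_3} => get u (i0 \in A) (i1 \in A) (i2 \in A)].
Definition tab (X : mv R) : v8 R := mkv (fun a b c => X (mk a b c)).
Lemma IR_tab X : IR (tab X) = X.
Proof. by apply/ffunP => A; rewrite ffunE get_mkv -mkK. Qed.
Lemma tab_IR u : tab (IR u) = u.
Proof.
rewrite /tab -[RHS]mkv_get; apply: eq_mkv => a b c; by rewrite ffunE !in_mk.
Qed.
Lemma IR_inj : injective IR.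
Proof. by move=> u v H; rewrite -(tab_IR u) H tab_IR. Qed.
Lemma IR_mk u a b c : IR u (mk a b c) = get u a b c.
Proof. by rewrite ffunE !in_mk. Qed.

Notation gp8R := (gp8 +%R *%R (@GRing.opp R)).
Notation add8R := (add8 +%R).
Notation opp8R := (opp8 (@GRing.opp R)).
Notation scale8R := (scale8 *%R).
Notation rev8R := (rev8 (@GRing.opp R)).

Lemma gp_IR u v : gp (IR u) (IR v) = IR (gp8R u v).
Proof.
apply/ffunP => K; rewrite (mkK K); move: (i0 \in K) (i1 \in K) (i2 \in K) => k0 k1 k2.
rewrite IR_mk get_mkv ffunE.
rewrite (eq_bigr (fun A : {set 'I_3} => bsign R A (mk (i0 \in A) (i1 \in A) (i2 \in A) :\: mk k0 k1 k2 :|: (mk k0 k1 k2 :\: mk (i0 \in A) (i1 \in A) (i2 \in A))) * IR u A *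
   IR v (mk (i0 \in A) (i1 \in A) (i2 \in A) :\: mk k0 k1 k2 :|: (mk k0 k1 k2 :\: mk (i0 \in A) (i1 \in A) (i2 \in A))))); last first.
  move=> A _; rewrite -!mkK; apply: big_pred1 => B /=.
  apply/eqP/eqP => [<-|->]; apply/setP => i; rewrite !inE;
    by case: (i \in A); case: (i \in B) => //=; case: (nth _ _ _).
rewrite sum_set3; apply: sum8_ext => a0 a1 a2.
rewrite !in_mk /= symd_mk !IR_mk bsign_mk.
by case: sgnb; rewrite ?mulN1r ?mul1r ?mulNr.
Qed.

Lemma add_IR u v : IR u + IR v = IR (add8R u v).
Proof. by apply/ffunP => A; rewrite !ffunE get_mkv. Qed.
Lemma opp_IR u : - IR u = IR (opp8R u).
Proof. by apply/ffunP => A; rewrite !ffunE get_mkv. Qed.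
Lemma scale_IR s u : s *: IR u = IR (scale8R s u).
Proof. by apply/ffunP => A; rewrite !ffunE get_mkv. Qed.
Lemma rev_IR u : Defs.rev (IR u) = IR (rev8R u).
Proof.
apply/ffunP => K; rewrite (mkK K); move: (i0 \in K) (i1 \in K) (i2 \in K) => k0 k1 k2.
rewrite ffunE !IR_mk get_mkv card_mk.
have H : odd 'C(k0 + k1 + k2, 2) = k0 && k1 || k0 && k2 || k1 && k2.
  by case: k0; case: k1; case: k2.
by rewrite -signr_odd H; case: ifP; rewrite ?mulN1r ?mul1r.
Qed.
Lemma blade_IR a b c : blade R (mk a b c) = IR (blade8 0 1 a b c).
Proof.
apply/ffunP => K; rewrite (mkK K); move: (i0 \in K) (i1 \in K) (i2 \in K) => k0 k1 k2.
by rewrite ffunE IR_mk get_mkv eq_mk; case: a; case: b; case: c; case: k0; case: k1; case: k2.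
Qed.
End RR.


Section RR2.
Variable R : rcfType.
Notation gp8R := (gp8 +%R *%R (@GRing.opp R)).
Notation add8R := (add8 (@GRing.add R)).
Notation opp8R := (opp8 (@GRing.opp R)).
Notation scale8R := (scale8 (@GRing.mul R)).
Notation rev8R := (rev8 (@GRing.opp R)).
Notation one8R := (blade8 (0:R) 1 false false false).

Ltac dest u := case: u => [[[[[[[? ?] ?] ?] ?] ?] ?] ?].

Lemma gp8A (u v w : v8 R) : gp8R (gp8R u v) w = gp8R u (gp8R v w).
Proof.
dest u; dest v; dest w; rewrite /gp8 /mkv /sum8 /=.
congr (_,_,_,_,_,_,_,_); ring.
Qed.
Lemma rev8_gp8 (u v : v8 R) : rev8R (gp8R u v) = gp8R (rev8R v) (rev8R u).
Proof.
dest u; dest v; rewrite /rev8 /gp8 /mkv /sum8 /=.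
congr (_,_,_,_,_,_,_,_); ring.
Qed.
Lemma rev8K (u : v8 R) : rev8R (rev8R u) = u.
Proof. dest u; rewrite /rev8 /mkv /=; by rewrite !opprK. Qed.
Lemma gp8_1l (u : v8 R) : gp8R one8R u = u.
Proof. dest u; rewrite /gp8 /blade8 /mkv /sum8 /=. congr (_,_,_,_,_,_,_,_); ring. Qed.
Lemma gp8_1r (u : v8 R) : gp8R u one8R = u.
Proof. dest u; rewrite /gp8 /blade8 /mkv /sum8 /=. congr (_,_,_,_,_,_,_,_); ring. Qed.
Lemma gp8_Nl (u v : v8 R) : gp8R (opp8R u) v = opp8R (gp8R u v).
Proof. dest u; dest v; rewrite /gp8 /opp8 /map8 /mkv /sum8 /=. congr (_,_,_,_,_,_,_,_); ring. Qed.
Lemma gp8_Nr (u v : v8 R) : gp8R u (opp8R v) = opp8R (gp8R u v).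
Proof. dest u; dest v; rewrite /gp8 /opp8 /map8 /mkv /sum8 /=. congr (_,_,_,_,_,_,_,_); ring. Qed.
Lemma rev8_opp (u : v8 R) : rev8R (opp8R u) = opp8R (rev8R u).
Proof. dest u; rewrite /rev8 /opp8 /map8 /mkv /=. by []. Qed.

Lemma gpA (X Y Z : mv R) : gp (gp X Y) Z = gp X (gp Y Z).
Proof. by rewrite -(IR_tab X) -(IR_tab Y) -(IR_tab Z) !gp_IR gp8A. Qed.
Lemma rev_gp (X Y : mv R) : Defs.rev (gp X Y) = gp (Defs.rev Y) (Defs.rev X).
Proof. by rewrite -(IR_tab X) -(IR_tab Y) !gp_IR !rev_IR gp_IR rev8_gp8. Qed.
Lemma revK (X : mv R) : Defs.rev (Defs.rev X) = X.
Proof. by rewrite -(IR_tab X) !rev_IR rev8K. Qed.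
Lemma one_IR : Defs.one R = IR one8R.
Proof. by rewrite /Defs.one (mkK set0) !inE blade_IR. Qed.
Lemma gp1l (X : mv R) : gp (Defs.one R) X = X.
Proof. by rewrite -(IR_tab X) one_IR gp_IR gp8_1l. Qed.
Lemma gp1r (X : mv R) : gp X (Defs.one R) = X.
Proof. by rewrite -(IR_tab X) one_IR gp_IR gp8_1r. Qed.
Lemma gpNl (X Y : mv R) : gp (- X) Y = - gp X Y.
Proof. by rewrite -(IR_tab X) -(IR_tab Y) opp_IR !gp_IR gp8_Nl opp_IR. Qed.
Lemma gpNr (X Y : mv R) : gp X (- Y) = - gp X Y.
Proof. by rewrite -(IR_tab X) -(IR_tab Y) opp_IR !gp_IR gp8_Nr opp_IR. Qed.
Lemma revN (X : mv R) : Defs.rev (- X) = - Defs.rev X.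
Proof. by rewrite -(IR_tab X) opp_IR !rev_IR rev8_opp opp_IR. Qed.

Lemma reflK (r X : mv R) : gp r (Defs.rev r) = Defs.one R -> gp (Defs.rev r) r = Defs.one R ->
  refl r (refl r X) = X.
Proof.
move=> h1 h2; rewrite /refl revN rev_gp rev_gp revK gpNr gpNl opprK.
by rewrite -!gpA h1 gp1l !gpA h2 gp1r.
Qed.
End RR2.


Notation K := (rat * rat)%type.
Definition kadd (x y : K) : K := (x.1 + y.1, x.2 + y.2).
Definition kmul (x y : K) : K := (x.1 * y.1 + x.2 * y.2, x.1 * y.2 + x.2 * y.1 + x.2 * y.2).
Definition kopp (x : K) : K := (- x.1, - x.2).
Definition k0 : K := (0, 0).
Definition k1 : K := (1, 0).
Definition km1 : K := (-1, 0).
Definition khalf : K := (2^-1, 0).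
Definition ktau : K := (0, 1).
Definition ksigma : K := (1, -1).
Notation kgp8 := (gp8 kadd kmul kopp).
Notation kadd8 := (add8 kadd).
Notation kopp8 := (opp8 kopp).
Notation kscale8 := (scale8 kmul).
Notation krev8 := (rev8 kopp).
Notation kbl := (blade8 k0 k1).
Definition kone := kbl false false false.
Definition ke1 := kbl true false false.
Definition ke2 := kbl false true false.
Definition ke3 := kbl false false true.
Definition ke12 := kgp8 ke1 ke2.
Definition ke13 := kgp8 ke1 ke3.
Definition ke23 := kgp8 ke2 ke3.
Definition kBs : seq (v8 K) :=
  [:: kadd8 (kscale8 ktau ke12) (kscale8 ksigma ke23);
      kadd8 (kscale8 ksigma ke13) (kscale8 ktau ke23);
      kadd8 (kscale8 ksigma ke12) (kopp8 (kscale8 ktau ke13))].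
Definition PsiK : seq (v8 K) :=
  [seq kscale8 s v | s <- [:: k1; km1], v <- [:: kone;
       kscale8 khalf (kadd8 (kadd8 (kscale8 ktau ke12) (kscale8 ksigma ke13)) ke23);
       kscale8 khalf (kadd8 (kadd8 ke12 (kopp8 (kscale8 ktau ke13))) (kscale8 ksigma ke23));
       kscale8 khalf (kadd8 (kadd8 (kscale8 ksigma ke12) (kopp8 ke13)) (kopp8 (kscale8 ktau ke23)))]]
  ++ [seq kscale8 khalf (kadd8 (kscale8 ss.1 kone) (kscale8 ss.2 B))
       | ss <- [seq (s1, s2) | s1 <- [:: k1; km1], s2 <- [:: k1; km1]], B <- kBs].
Definition ka2 : v8 K := kscale8 khalf (kadd8 (kadd8 (kopp8 (kscale8 ktau ke1)) (kopp8 ke2))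
                          (kopp8 (kscale8 (kadd ktau (kopp k1)) ke3))).
Definition aK (i : 'I_3) : v8 K :=
  match val i with
  | 0 => ke2
  | 1 => ka2
  | _ => ke1 end.
Definition kprod (w : seq 'I_3) : v8 K := foldr (fun i acc => kgp8 (aK i) acc) kone w.
Definition krefl (r x : v8 K) : v8 K := kopp8 (kgp8 (kgp8 r (krev8 x)) r).
Definition wordsN : seq (seq nat) :=
 [:: [::]; [:: 0; 2; 1; 2; 0; 1; 0; 2]; [:: 0; 1; 2; 1; 2; 0; 1; 2; 1; 0];
  [:: 2; 1; 2; 0; 1; 2; 0; 1; 0; 2; 1; 2]; [:: 0; 2; 0; 2]; [:: 2; 0; 1; 2; 0; 1; 0; 2];
  [:: 0; 1; 2; 1; 0; 2; 1; 2; 1; 0]; [:: 2; 1; 0; 2; 1; 2; 0; 1; 0; 2; 1; 2];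
  [:: 1; 2; 0; 2]; [:: 0; 1; 2; 1; 2; 0; 1; 2; 1; 2]; [:: 1; 2; 0; 1; 0; 2; 1; 2];
  [:: 2; 0; 2; 1]; [:: 1; 2; 1; 2; 0; 1; 2; 1; 0; 1]; [:: 2; 1; 0; 2; 1; 2; 0; 1];
  [:: 0; 1]; [:: 1; 2; 1; 0; 2; 1; 2; 1; 0; 1]; [:: 2; 1; 2; 0; 1; 2; 0; 1];
  [:: 1; 0]; [:: 0; 1; 2; 1; 0; 2; 1; 2; 1; 2]; [:: 1; 0; 2; 1; 0; 2; 1; 2]].
Definition ordOf (n : nat) : 'I_3 := match n with 0 => i0 | 1 => i1 | _ => i2 end.
Definition words : seq (seq 'I_3) := [seq [seq ordOf i | i <- w] | w <- wordsN].
Definition wm1 : seq 'I_3 := [:: i0; i2; i0; i2].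

Definition check_all : bool :=
  all (fun r => all (fun x => krefl r x \in PsiK) PsiK) PsiK &&
  all (fun r => (kgp8 r (krev8 r) == kone) && (kgp8 (krev8 r) r == kone)) PsiK &&
  all (fun r => has (fun w => ~~ odd (size w) && (kprod w == r)) words) PsiK &&
  (krev8 ke1 == ke1) && (krev8 ke2 == ke2) && (krev8 ka2 == ka2) &&
  (krev8 kone == kone) && (kprod wm1 == kopp8 kone).

Lemma check_allP : check_all = true.
Proof. vm_compute. reflexivity. Qed.


Section RR3.
Variable R : rcfType.
Notation gp8R := (gp8 +%R *%R (@GRing.opp R)).
Notation add8R := (add8 (@GRing.add R)).
Notation opp8R := (opp8 (@GRing.opp R)).
Notation scale8R := (scale8 (@GRing.mul R)).
Notation rev8R := (rev8 (@GRing.opp R)).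

Lemma tau2 : tau R ^+ 2 = tau R + 1.
Proof.
rewrite /tau; have h : Num.sqrt (5 : R) ^+ 2 = 5 by rewrite sqr_sqrtr // ler0n.
have -> : ((1 + Num.sqrt (5:R)) / 2) ^+ 2 = (1 + 2 * Num.sqrt 5 + Num.sqrt 5 ^+ 2) / 4 by field.
by rewrite h; field.
Qed.

Definition phi (x : K) : R := ratr x.1 + ratr x.2 * tau R.
Lemma phiD x y : phi (kadd x y) = phi x + phi y.
Proof. rewrite /phi /kadd /= !rmorphD /=; ring. Qed.
Lemma phiN x : phi (kopp x) = - phi x.
Proof. rewrite /phi /kopp /= !rmorphN /=; ring. Qed.
Lemma phiM x y : phi (kmul x y) = phi x * phi y.
Proof.
case: x => a b; case: y => c d; rewrite /phi /kmul /= !rmorphD !rmorphM /=.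
rewrite (_ : (ratr a + ratr b * tau R) * (ratr c + ratr d * tau R) =
  ratr a * ratr c + (ratr a * ratr d + ratr b * ratr c) * tau R + ratr b * ratr d * tau R ^+ 2);
  last by ring.
rewrite tau2; ring.
Qed.
Lemma phi0 : phi k0 = 0. Proof. by rewrite /phi /= rmorph0 mul0r addr0. Qed.
Lemma phi1 : phi k1 = 1. Proof. by rewrite /phi /= rmorph0 rmorph1 mul0r addr0. Qed.
Lemma phim1 : phi km1 = -1. Proof. by rewrite /phi /= rmorph0 rmorphN1 mul0r addr0. Qed.
Lemma phihalf : phi khalf = 1 / 2.
Proof.
rewrite /phi /= rmorph0 mul0r addr0 fmorphV mul1r; congr (_^-1).
by rewrite (rmorphD ratr 1 1) rmorph1.
Qed.
Lemma phitau : phi ktau = tau R.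
Proof. by rewrite /phi /= rmorph0 rmorph1 mul1r add0r. Qed.
Lemma phisigma : phi ksigma = sigma R.
Proof. by rewrite /phi /= rmorph1 rmorphN1 /sigma /tau; field. Qed.

Definition phiv (u : v8 K) : v8 R := map8 phi u.
Definition F (u : v8 K) : mv R := IR (phiv u).

Lemma phiv_gp u v : phiv (kgp8 u v) = gp8R (phiv u) (phiv v).
Proof. exact: map8_gp8 phiD phiM phiN u v. Qed.
Lemma phiv_add u v : phiv (kadd8 u v) = add8R (phiv u) (phiv v).
Proof. exact: map8_add8 phiD u v. Qed.
Lemma phiv_opp u : phiv (kopp8 u) = opp8R (phiv u).
Proof. exact: map8_opp8 phiN u. Qed.
Lemma phiv_scale s u : phiv (kscale8 s u) = scale8R (phi s) (phiv u).
Proof. exact: map8_scale8 phiM s u. Qed.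
Lemma phiv_rev u : phiv (krev8 u) = rev8R (phiv u).
Proof. exact: map8_rev8 phiN u. Qed.
Lemma phiv_bl a b c : phiv (kbl a b c) = blade8 0 1 a b c.
Proof. exact: map8_blade8 phi0 phi1. Qed.

Lemma F_gp u v : F (kgp8 u v) = gp (F u) (F v).
Proof. by rewrite /F phiv_gp gp_IR. Qed.
Lemma F_add u v : F (kadd8 u v) = F u + F v.
Proof. by rewrite /F phiv_add add_IR. Qed.
Lemma F_opp u : F (kopp8 u) = - F u.
Proof. by rewrite /F phiv_opp opp_IR. Qed.
Lemma F_scale s u : F (kscale8 s u) = phi s *: F u.
Proof. by rewrite /F phiv_scale scale_IR. Qed.
Lemma F_rev u : F (krev8 u) = Defs.rev (F u).
Proof. by rewrite /F phiv_rev rev_IR. Qed.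
Lemma F_one : F kone = Defs.one R.
Proof. by rewrite /F /kone phiv_bl one_IR. Qed.
Lemma F_e1 : F ke1 = e1 R.
Proof. by rewrite /F /ke1 phiv_bl /e1 /e (mkK [set _]) !inE /= blade_IR. Qed.
Lemma F_e2 : F ke2 = e2 R.
Proof. by rewrite /F /ke2 phiv_bl /e2 /e (mkK [set _]) !inE /= blade_IR. Qed.
Lemma F_e3 : F ke3 = e3 R.
Proof. by rewrite /F /ke3 phiv_bl /e3 /e (mkK [set _]) !inE /= blade_IR. Qed.
Lemma F_e12 : F ke12 = e12 R. Proof. by rewrite /ke12 F_gp F_e1 F_e2. Qed.
Lemma F_e13 : F ke13 = e13 R. Proof. by rewrite /ke13 F_gp F_e1 F_e3. Qed.
Lemma F_e23 : F ke23 = e23 R. Proof. by rewrite /ke23 F_gp F_e2 F_e3. Qed.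

Lemma Psi_eq : Psi R = map F PsiK.
Proof.
rewrite /Psi /PsiK /kBs /Bs.
cbn [flatten foldr map cat fst snd].
have Ph : phi khalf = Defs.half R by rewrite phihalf.
move: F_one F_e12 F_e13 F_e23 phi1 phim1 Ph phitau phisigma.
move: kone ke12 ke13 ke23 k1 km1 khalf ktau ksigma => o x12 x13 x23 s1 sm1 sh st ss Ho H12 H13 H23 P1 Pm1 Pha Pt Ps.
do 4 rewrite ?F_scale ?F_add ?F_opp.
by rewrite Ho H12 H13 H23 ?P1 ?Pm1 ?Pha ?Pt ?Ps.
Qed.

Lemma a_F i : a R i = F (aK i).
Proof.
rewrite /a /aK; case: (val i) => [|[|n]].
- by rewrite F_e2.
- rewrite /a2 /ka2.
  move: F_e1 F_e2 F_e3 phi1 phihalf phitau.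
  move: ke1 ke2 ke3 k1 khalf ktau => x1 x2 x3 s1 sh st H1 H2 H3 P1 Ph Pt.
  do 4 rewrite ?F_scale ?F_add ?F_opp.
  by rewrite H1 H2 H3 ?phiD ?phiN ?P1 ?Ph ?Pt.
- by rewrite F_e1.
Qed.
End RR3.


Section Final.
Variable R : rcfType.

Lemma checks :
  [/\ all (fun r => all (fun x => krefl r x \in PsiK) PsiK) PsiK,
      all (fun r => (kgp8 r (krev8 r) == kone) && (kgp8 (krev8 r) r == kone)) PsiK,
      all (fun r => has (fun w => ~~ odd (size w) && (kprod w == r)) words) PsiK,
      [&& krev8 ke1 == ke1, krev8 ke2 == ke2 & krev8 ka2 == ka2] &
      (krev8 kone == kone) && (kprod wm1 == kopp8 kone)].
Proof.
have := check_allP; rewrite /check_all.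
move=> /andP[/andP[/andP[/andP[/andP[/andP[/andP[c1 c2] c3] c4a] c4b] c4c] c5] c6].
by split => //; apply/and3P.
Qed.

Lemma refl_F r x : refl (F R r) (F R x) = F R (krefl r x).
Proof. by rewrite /krefl F_opp !F_gp F_rev. Qed.

Lemma Psi_refl r X : r \in Psi R -> X \in Psi R -> refl r X \in Psi R.
Proof.
have [c1 _ _ _ _] := checks.
rewrite Psi_eq => /mapP[r' hr ->] /mapP[x' hx ->].
by rewrite refl_F; apply: map_f; exact: (allP (allP c1 r' hr) x' hx).
Qed.

Lemma Psi_unit r : r \in Psi R ->
  gp r (Defs.rev r) = Defs.one R /\ gp (Defs.rev r) r = Defs.one R.
Proof.
have [_ c2 _ _ _] := checks.
rewrite Psi_eq => /mapP[r' hr ->].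
have /andP[/eqP h1 /eqP h2] := allP c2 r' hr.
by split; rewrite -F_rev -F_gp ?h1 ?h2 F_one.
Qed.

Lemma prodw_F w : prodw R w = F R (kprod w).
Proof.
rewrite /prodw /kprod; elim: w => [|i w IH] /=; first by rewrite F_one.
by rewrite IH a_F F_gp.
Qed.

Lemma prodw_cat w1 w2 : prodw R (w1 ++ w2) = gp (prodw R w1) (prodw R w2).
Proof.
rewrite /prodw; elim: w1 => [|i w IH] /=; first by rewrite gp1l.
by rewrite IH gpA.
Qed.

Lemma rev_a i : Defs.rev (a R i) = a R i.
Proof.
have [_ _ _ /and3P[/eqP h1 /eqP h2 /eqP h3] _] := checks.
rewrite a_F -F_rev; congr (F R _).
by rewrite /aK; case: (val i) => [|[|n]].
Qed.

Lemma rev_prodw w : Defs.rev (prodw R w) = prodw R (rev w).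
Proof.
have [_ _ _ _ /andP[/eqP h _]] := checks.
elim: w => [|i w IH].
  by rewrite /= -F_one -F_rev h.
rewrite (_ : prodw R (i :: w) = gp (a R i) (prodw R w)) // rev_gp IH rev_a.
by rewrite rev_cons -cats1 prodw_cat /= gp1r.
Qed.

Lemma in2I_refl r X : r \in Psi R -> in2I X -> in2I (refl r X).
Proof.
have [_ _ c3 _ /andP[_ /eqP h6]] := checks.
move=> hr [w [ew ->]].
move: (hr); rewrite Psi_eq => /mapP[r' hr' er].
have /hasP[w' _ /andP[ew' /eqP hw']] := allP c3 r' hr'.
have -> : r = prodw R w' by rewrite er prodw_F hw'.
exists (wm1 ++ (w' ++ rev w) ++ w'); split.
  rewrite !size_cat size_rev !oddD (negbTE ew) (negbTE ew'); exact: isT.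
rewrite prodw_cat (prodw_F wm1) h6 F_opp F_one gpNl gp1l prodw_cat prodw_cat -rev_prodw.
rewrite /refl; reflexivity.
Qed.

Lemma inC_refl r X : r \in Psi R -> inC X -> inC (refl r X).
Proof.
move=> hr [h2I hnot]; split; first exact: in2I_refl.
apply/negP => hin; move/negP: hnot; apply.
have [u1 u2] := Psi_unit hr.
by rewrite -(reflK X u1 u2); apply: Psi_refl.
Qed.
End Final.

Theorem mainTheorem10 (R : rcfType) (ws : seq (mv R)) :
  all (fun r => r \in Psi R) ws ->
  (forall X : mv R, X \in Psi R -> actw ws X \in Psi R) /\
  (forall X : mv R, inC X -> inC (actw ws X)).
Proof.
elim: ws => [|r ws IH] /=; first by split.
move=> /andP[hr /IH [IH1 IH2]]; split => X hX.
  exact: Psi_refl (IH1 X hX).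
exact: inC_refl (IH2 X hX).
Qed.
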